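(* Let $G=(A,B;E)$ be a bipartite graph with bipartition $\{A,B\}$, let $\bar G$ be its complement, and let $T,T'$ be $(p,p)$-bicliques of $G$. There is a TJ-move from $T$ to $T'$ in $G$ (i.e., $|T\setminus T'|=|T'\setminus T|=1$) if and only if there is a CS1-move from $T$ to $T'$ in $\bar G$.
   Context: A vertex set $S$ is a $(p,q)$-biclique of $G$ if $G[S]$ is isomorphic to $K_{p,q}$. For a graph $F$ and $S\subseteq V(F)$, $\mathsf{cc}_F(S)$ is the set of vertex sets of connected components of $F[S]$. A CS1-move from $T$ to $T'$ in $\bar G$ (where $T,T'$ have the same multiset of component sizes) means: $|\mathsf{cc}_{\bar G}(T)\setminus\mathsf{cc}_{\bar G}(T')|=|\mathsf{cc}_{\bar G}(T')\setminus\mathsf{cc}_{\bar G}(T)|=1$, and the unique elements $X\in\mathsf{cc}_{\bar G}(T)\setminus\mathsf{cc}_{\bar G}(T')$ and $X'\in\mathsf{cc}_{\bar G}(T')\setminus\mathsf{cc}_{\bar G}(T)$ satisfy that $\bar G[X\cup X']$ is connected and $|X\setminus X'|=|X'\setminus X|=1$. The complement $\bar G$ has the same vertex set, with two distinct vertices adjacent iff they are non-adjacent in $G$. *)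

(* Defs.v *)
From mathcomp Require Import all_boot.
Set Implicit Arguments. Unset Strict Implicit. Unset Printing Implicit Defensive.

Section Defs.
Variable V : finType.

Definition simple_graph (e : rel V) := symmetric e /\ irreflexive e.

Definition bipartition (e : rel V) (A B : {set V}) :=
  [/\ A :&: B = set0, A :|: B = setT &
      forall x y, e x y -> (x \in A /\ y \in B) \/ (x \in B /\ y \in A)].

Definition compl (e : rel V) : rel V := fun x y => (x != y) && ~~ e x y.

Definition Kpq_adj (p q : nat) (u v : 'I_p + 'I_q) : bool :=
  match u, v with
  | inl _, inr _ => true
  | inr _, inl _ => true
  | _, _ => false
  end.

Definition biclique (e : rel V) (p q : nat) (S : {set V}) :=
  exists g : 'I_p + 'I_q -> V,
    [/\ injective g, g @: setT = S &
        forall u v, e (g u) (g v) = Kpq_adj u v].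

Definition induced_rel (F : rel V) (S : {set V}) : rel V :=
  fun x y => [&& F x y, x \in S & y \in S].

Definition comp_of (F : rel V) (S : {set V}) (x : V) : {set V} :=
  [set y in S | connect (induced_rel F S) x y].

Definition cc (F : rel V) (S : {set V}) : {set {set V}} :=
  [set comp_of F S x | x in S].

Definition connected_in (F : rel V) (X : {set V}) :=
  forall x y, x \in X -> y \in X -> connect (induced_rel F X) x y.

Definition comp_sizes (F : rel V) (S : {set V}) : seq nat :=
  [seq #|C| | C : {set V} in cc F S].

Definition TJ_move (T T' : {set V}) :=
  #|T :\: T'| = 1 /\ #|T' :\: T| = 1.

Definition CS1_move (F : rel V) (T T' : {set V}) :=
  [/\ perm_eq (comp_sizes F T) (comp_sizes F T'),
      #|cc F T :\: cc F T'| = 1,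
      #|cc F T' :\: cc F T| = 1 &
      forall X X', X \in cc F T :\: cc F T' -> X' \in cc F T' :\: cc F T ->
        [/\ connected_in F (X :|: X'), #|X :\: X'| = 1 & #|X' :\: X| = 1]].
End Defs.

(* Main.v *)
Require Import Defs.
From mathcomp Require Import all_boot zify.
Set Implicit Arguments. Unset Strict Implicit. Unset Printing Implicit Defensive.

Section L.
Variables (V : finType) (e : rel V) (A B : {set V}).
Hypothesis HAB : bipartition e A B.

Lemma inB x : (x \in B) = (x \notin A).
Proof.
case: HAB => HI HU _.
have h1 : x \in A :|: B by rewrite HU inE.
have h2 : x \notin A :&: B by rewrite HI inE.
by move: h1 h2; rewrite !inE; case: (x \in A); case: (x \in B).
Qed.

Lemma e_sides x y : e x y -> (x \in A) != (y \in A).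
Proof.
case: HAB => _ _ H /H; rewrite !inB.
by case=> [[-> /negbTE ->]|[/negbTE -> ->]].
Qed.

Lemma bic0 T : biclique e 0 0 T -> T = set0.
Proof.
case=> g [_ <- _]; apply/setP => x; rewrite inE.
by apply/imsetP => -[[[m Hm]|[m Hm]] _ _].
Qed.

Lemma bic_pos p T : biclique e p p T -> 0 < p ->
  [/\ #|T :&: A| = p, #|T :&: B| = p &
   forall x y, x \in T -> y \in T -> e x y = ((x \in A) != (y \in A))].
Proof.
case=> g [ginj gT ge] p0.
set i0 : 'I_p := Ordinal p0.
set s := g (inl i0) \in A.
have side : forall w, (g w \in A) = (if w is inl _ then s else ~~ s).
  have h0 : (g (inl i0) \in A) != (g (inr i0) \in A) by apply: e_sides; rewrite ge.
  case=> [i|j].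
    have h1 : (g (inl i) \in A) != (g (inr i0) \in A) by apply: e_sides; rewrite ge.
    by move: h0 h1; rewrite -/s; case: s; case: (g (inr i0) \in A); case: (g (inl i) \in A).
  have h1 : (g (inl i0) \in A) != (g (inr j) \in A) by apply: e_sides; rewrite ge.
  by move: h0 h1; rewrite -/s; case: s; case: (g (inr i0) \in A); case: (g (inr j) \in A).
have cT : #|T| = p + p by rewrite -gT card_imset // cardsT card_sum card_ord.
have csum : #|T :&: A| + #|T :&: B| = #|T|.
  rewrite -(cardsID A T); congr (_ + _); apply: eq_card => x; rewrite !inE inB.
  by case: (x \in T); case: (x \in A).
have injl : injective (g \o inl : 'I_p -> V) by move=> i j /ginj [].
have injr : injective (g \o inr : 'I_p -> V) by move=> i j /ginj [].
have cl : #|(g \o inl) @: [set: 'I_p]| = p by rewrite card_imset // cardsT card_ord.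
have cr : #|(g \o inr) @: [set: 'I_p]| = p by rewrite card_imset // cardsT card_ord.
have sl : (g \o inl) @: [set: 'I_p] \subset T :&: [set x | (x \in A) == s].
  apply/subsetP => x /imsetP [i _ ->]; rewrite !inE /= side eqxx andbT.
  by rewrite -gT; apply: imset_f.
have sr : (g \o inr) @: [set: 'I_p] \subset T :&: [set x | (x \in A) == ~~ s].
  apply/subsetP => x /imsetP [i _ ->]; rewrite !inE /= side eqxx andbT.
  by rewrite -gT; apply: imset_f.
have [h1 h2] : p <= #|T :&: A| /\ p <= #|T :&: B|.
  have e1 : forall c : bool, T :&: [set x | (x \in A) == c] = if c then T :&: A else T :&: B.
    move=> c; apply/setP => x; case: c; rewrite !inE ?inB; by case: (x \in A).
  have l1 := subset_leq_card sl; have l2 := subset_leq_card sr.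
  rewrite !e1 cl cr in l1 l2; move: l1 l2; case: (s) => /= l1 l2; lia.
split; [lia|lia|].
move=> x y; rewrite -gT => /imsetP [u _ ->] /imsetP [v _ ->].
by rewrite ge !side; case: u; case: v => //= *; case: (s).
Qed.

Lemma comp_ofE (T : {set V}) x :
  (forall x y, x \in T -> y \in T -> e x y = ((x \in A) != (y \in A))) ->
  x \in T -> comp_of (compl e) T x = if x \in A then T :&: A else T :&: B.
Proof.
move=> Hed xT.
have -> : (if x \in A then T :&: A else T :&: B) = [set y in T | (y \in A) == (x \in A)].
  by apply/setP => y; case: (x \in A); rewrite !inE ?inB; case: (y \in A); rewrite ?andbT ?andbF.
apply/setP => y; rewrite !inE; case yT: (y \in T) => //=.
apply/idP/idP.
  move=> /(closed_connect (a := mem A)) <- //.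
  move=> u v; rewrite /induced_rel /compl => /and3P [/andP [_ neu] uT vT].
  by move: neu; rewrite Hed //; case: (u \in A); case: (v \in A).
move=> /eqP hs; case: (altP (x =P y)) => [->|nxy]; first exact: connect0.
apply: connect1; rewrite /induced_rel /compl nxy xT yT Hed // hs eqxx.
done.
Qed.

Lemma ccE p T : biclique e p p T -> 0 < p -> cc (compl e) T = [set T :&: A; T :&: B].
Proof.
move=> HT p0; case: (bic_pos HT p0) => ca cb Hed.
apply/setP => C; rewrite !inE; apply/imsetP/orP.
  case=> x xT ->; rewrite comp_ofE //; case: (x \in A); by [left|right].
case=> /eqP ->.
  have : T :&: A != set0 by rewrite -card_gt0 ca.
  case/set0Pn => x; rewrite inE => /andP [xT xA]; exists x => //.
  by rewrite comp_ofE // xA.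
have : T :&: B != set0 by rewrite -card_gt0 cb.
case/set0Pn => x; rewrite inE inB => /andP [xT xA]; exists x => //.
by rewrite comp_ofE // (negbTE xA).
Qed.

Lemma connE (X : {set V}) : (forall x y, x \in X -> y \in X -> ~~ e x y) -> connected_in (compl e) X.
Proof.
move=> H x y xX yX; case: (altP (x =P y)) => [->|nxy]; first exact: connect0.
by apply: connect1; rewrite /induced_rel /compl nxy xX yX H.
Qed.

Lemma csizes (S a b : {set V}) p : cc (compl e) S = [set a; b] -> a != b -> #|a| = p -> #|b| = p ->
  comp_sizes (compl e) S = nseq 2 p.
Proof.
move=> HS nab ca cb; rewrite /comp_sizes.
have sz : size [seq #|C| | C : {set V} in cc (compl e) S] = 2.
  by rewrite size_image HS cards2 nab.
rewrite -sz; apply/all_pred1P/allP => n /imageP [C]; rewrite HS !inE.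
by case/orP => /eqP -> ->; rewrite /= ?ca ?cb.
Qed.


Lemma TJcard (T T' : {set V}) :
  #|T :\: T'| = #|(T :&: A) :\: (T' :&: A)| + #|(T :&: B) :\: (T' :&: B)|.
Proof.
have -> : T :\: T' = ((T :&: A) :\: (T' :&: A)) :|: ((T :&: B) :\: (T' :&: B)).
  apply/setP => x; rewrite !inE !inB.
  by case: (x \in A); case: (x \in T); case: (x \in T').
rewrite cardsU.
have -> : ((T :&: A) :\: (T' :&: A)) :&: ((T :&: B) :\: (T' :&: B)) = set0.
  apply/setP => x; rewrite !inE !inB.
  by case: (x \in A); case: (x \in T); case: (x \in T').
by rewrite cards0 subn0.
Qed.

Lemma neqAB (S S' : {set V}) : 0 < #|S :&: A| -> S :&: A != S' :&: B.
Proof.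
rewrite card_gt0 => /set0Pn [x xS]; apply/eqP => E.
have : x \in S' :&: B by rewrite -E.
by move: xS; rewrite !inE inB => /andP [_ ->]; rewrite andbF.
Qed.

Lemma cardD0 (X Y : {set V}) : #|X| = #|Y| -> (#|X :\: Y| == 0) = (X == Y).
Proof. by move=> H; rewrite cards_eq0 setD_eq0 eqEcard H leqnn andbT. Qed.

Lemma core (a b a' b' T T' : {set V}) p :
  cc (compl e) T = [set a; b] -> cc (compl e) T' = [set a'; b'] ->
  #|a| = p -> #|b| = p -> #|a'| = p -> #|b'| = p ->
  a != b' -> b != a' -> a != b -> a' != b' ->
  (forall x y, x \in a :|: a' -> y \in a :|: a' -> ~~ e x y) ->
  (forall x y, x \in b :|: b' -> y \in b :|: b' -> ~~ e x y) ->
  #|T :\: T'| = #|a :\: a'| + #|b :\: b'| ->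
  #|T' :\: T| = #|a' :\: a| + #|b' :\: b| ->
  TJ_move T T' <-> CS1_move (compl e) T T'.
Proof.
move=> HcT HcT' ca cb ca' cb' nab' nba' nab na'b' Ea Eb H1 H2.
rewrite /CS1_move HcT HcT' /TJ_move H1 H2.
have ps : perm_eq (comp_sizes (compl e) T) (comp_sizes (compl e) T').
  by rewrite (csizes HcT nab ca cb) (csizes HcT' na'b' ca' cb').
case: (altP (a =P a')) => [Ea'|Na]; case: (altP (b =P b')) => [Eb'|Nb].
- subst a' b'; rewrite !setDv !cards0.
  split; case=> //.
- subst a'.
  have D1 : [set a; b] :\: [set a; b'] = [set b].
    apply/setP => C; rewrite !inE; case: (altP (C =P b)) => [->|nCb] /=.
      by rewrite (negbTE Nb) eq_sym (negbTE nab).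
    by rewrite ?orbF; do 2?[case: (C == _) => //=]; rewrite ?andbF.
  have D2 : [set a; b'] :\: [set a; b] = [set b'].
    apply/setP => C; rewrite !inE; case: (altP (C =P b')) => [->|nCb] /=.
      by rewrite orbT andbT ![b' == _]eq_sym (negbTE Nb) (negbTE na'b').
    by rewrite ?orbF; do 2?[case: (C == _) => //=]; rewrite ?andbF.
  rewrite D1 D2 !cards1 !setDv cards0 !add0n; split.
    case=> h1 h2; split => // X X'; rewrite !inE => /eqP -> /eqP ->; split => //.
    exact: connE.
  by case=> _ _ _ H; case: (H b b'); rewrite ?inE ?eqxx.
- subst b'.
  have D1 : [set a; b] :\: [set a'; b] = [set a].
    apply/setP => C; rewrite !inE; case: (altP (C =P a)) => [->|nCb] /=.
      by rewrite (negbTE Na) (negbTE nab).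
    by rewrite ?orbF; do 2?[case: (C == _) => //=]; rewrite ?andbF.
  have D2 : [set a'; b] :\: [set a; b] = [set a'].
    apply/setP => C; rewrite !inE; case: (altP (C =P a')) => [->|nCb] /=.
      by rewrite eq_sym (negbTE Na) (negbTE na'b').
    by rewrite ?orbF; do 2?[case: (C == _) => //=]; rewrite ?andbF.
  rewrite D1 D2 !cards1 !setDv cards0 !addn0; split.
    case=> h1 h2; split => // X X'; rewrite !inE => /eqP -> /eqP ->; split => //.
    exact: connE.
  by case=> _ _ _ H; case: (H a a'); rewrite ?inE ?eqxx.
- split.
    case=> h1 _.
    have l1 : 0 < #|a :\: a'| by rewrite lt0n cardD0 ?Na // ca ca'.
    have l2 : 0 < #|b :\: b'| by rewrite lt0n cardD0 ?Nb // cb cb'.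
    lia.
  case=> _ h _ _.
  have sub : [set a; b] \subset [set a; b] :\: [set a'; b'].
    apply/subsetP => C; rewrite !inE; case/orP => /eqP ->; rewrite eqxx ?orbT andbT.
      by rewrite (negbTE Na) (negbTE nab').
    by rewrite (negbTE nba') (negbTE Nb).
  by have := subset_leq_card sub; rewrite h cards2 nab.
Qed.
End L.

Theorem lemma6 (V : finType) (e : rel V) (He : simple_graph e)
  (A B : {set V}) (HAB : bipartition e A B) (p : nat) (T T' : {set V})
  (HT : biclique e p p T) (HT' : biclique e p p T') :
  TJ_move T T' <-> CS1_move (compl e) T T'.
Proof.
case: (posnP p) => [p0|pp].
  subst p; rewrite (bic0 HT) (bic0 HT') /TJ_move /CS1_move /cc imset0 !setDv !cards0.
  by split; case.
case: (bic_pos HAB HT pp) => ca cb Hed.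
case: (bic_pos HAB HT' pp) => ca' cb' Hed'.
have sA : forall x y, x \in (T :&: A) :|: (T' :&: A) -> y \in (T :&: A) :|: (T' :&: A) -> ~~ e x y.
  move=> x y hx hy; apply/negP => /(e_sides HAB).
  by move: hx hy; rewrite !inE => /orP [/andP [_ ->]|/andP [_ ->]] /orP [/andP [_ ->]|/andP [_ ->]].
have sB : forall x y, x \in (T :&: B) :|: (T' :&: B) -> y \in (T :&: B) :|: (T' :&: B) -> ~~ e x y.
  move=> x y hx hy; apply/negP => /(e_sides HAB).
  by move: hx hy; rewrite !inE !(inB HAB) => /orP [/andP [_ /negbTE ->]|/andP [_ /negbTE ->]] /orP [/andP [_ /negbTE ->]|/andP [_ /negbTE ->]].
have K := core (ccE HAB HT pp) (ccE HAB HT' pp) ca cb ca' cb'. apply: K => //.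
all: try (by apply: (neqAB HAB); rewrite ?ca ?ca').
all: try (by rewrite eq_sym; apply: (neqAB HAB); rewrite ?ca ?ca').
all: exact: (TJcard HAB).
Qed.
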